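(* Let $c(t)$ be a solution of Hamilton's equations for the Kepler–Heisenberg Hamiltonian defined on an open interval $I$, and suppose $z(t) = 0$ for all $t\in I$. Then the projected curve $t\mapsto (x(t),y(t))$ is contained in a straight line through the origin of the $xy$-plane.
   Context: Phase space is $T^*\mathbb R^3$ with coordinates $(x,y,z,p_x,p_y,p_z)$. Set $P_X = p_x - \tfrac12 y p_z$, $P_Y = p_y + \tfrac12 x p_z$. The Kepler–Heisenberg Hamiltonian is $H = \tfrac12(P_X^2 + P_Y^2) - \frac{1}{8\pi\sqrt{(x^2+y^2)^2+16z^2}}$, defined away from $x=y=z=0$. *)

(* Defs.v *)
From Stdlib Require Import Reals.
From Coquelicot Require Import Coquelicot.
Open Scope R_scope.

Definition PX (x y px pz : R) : R := px - / 2 * y * pz.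
Definition PY (x y py pz : R) : R := py + / 2 * x * pz.

(* Kepler--Heisenberg Hamiltonian on T^*R^3 (coordinates x y z px py pz),
   meaningful away from x = y = z = 0. *)
Definition KH (x y z px py pz : R) : R :=
  / 2 * ((PX x y px pz) ^ 2 + (PY x y py pz) ^ 2)
  - / (8 * PI * sqrt ((x ^ 2 + y ^ 2) ^ 2 + 16 * z ^ 2)).

Definition in_open_interval (a b : Rbar) (t : R) : Prop :=
  Rbar_lt a (Finite t) /\ Rbar_lt (Finite t) b.

Definition KH_solution (a b : Rbar) (x y z px py pz : R -> R) : Prop :=
  forall t, in_open_interval a b t ->
    ~ (x t = 0 /\ y t = 0 /\ z t = 0) /\
    is_derive x t (Derive (fun u => KH (x t) (y t) (z t) u (py t) (pz t)) (px t)) /\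
    is_derive y t (Derive (fun u => KH (x t) (y t) (z t) (px t) u (pz t)) (py t)) /\
    is_derive z t (Derive (fun u => KH (x t) (y t) (z t) (px t) (py t) u) (pz t)) /\
    is_derive px t (- Derive (fun u => KH u (y t) (z t) (px t) (py t) (pz t)) (x t)) /\
    is_derive py t (- Derive (fun u => KH (x t) u (z t) (px t) (py t) (pz t)) (y t)) /\
    is_derive pz t (- Derive (fun u => KH (x t) (y t) u (px t) (py t) (pz t)) (z t)).

(* Main.v *)
Require Import Defs.
From Stdlib Require Import Reals Lra.
From Coquelicot Require Import Coquelicot.
Open Scope R_scope.
Lemma qder f g t f' g' : is_derive f t f' -> is_derive g t g' -> 0 < f t ^ 2 + g t ^ 2 ->
  f t * g' - g t * f' = 0 ->
  is_derive (fun s => f s / sqrt (f s ^ 2 + g s ^ 2)) t 0 /\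
  is_derive (fun s => g s / sqrt (f s ^ 2 + g s ^ 2)) t 0.
Proof.
intros Hf Hg Hp Hz.
assert (Ef : Derive f t = f') by (apply is_derive_unique; auto).
assert (Eg : Derive g t = g') by (apply is_derive_unique; auto).
assert (Hs : 0 < sqrt (f t ^ 2 + g t ^ 2)) by (apply sqrt_lt_R0; auto).
assert (HS : sqrt (f t ^ 2 + g t ^ 2) * sqrt (f t ^ 2 + g t ^ 2) = f t ^ 2 + g t ^ 2)
  by (apply sqrt_sqrt; lra).
replace (f t * (f t * 1) + g t * (g t * 1)) with (f t ^ 2 + g t ^ 2) by ring.
split; auto_derive; repeat split; try (eexists; eauto); auto; try lra;
change (fun x : R => f x) with f; change (fun x : R => g x) with g;
try rewrite Ef, Eg;
replace (f t * (f t * 1) + g t * (g t * 1)) with (f t ^ 2 + g t ^ 2) by ring;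
revert Hs HS; set (s := sqrt (f t ^ 2 + g t ^ 2)); intros Hs HS; try lra; rewrite HS.
- transitivity (g t * (g t * f' - f t * g') / (s * (f t ^ 2 + g t ^ 2))).
  + field; lra.
  + replace (g t * f' - f t * g') with 0 by lra. field; lra.
- transitivity (f t * (f t * g' - g t * f') / (s * (f t ^ 2 + g t ^ 2))).
  + field; lra.
  + rewrite Hz. field; lra.
Qed.
Lemma dpz X Y Z A B C : Derive (fun u => KH X Y Z A B u) C = / 2 * (X * PY X Y B C - Y * PX X Y A C).
Proof. apply is_derive_unique. unfold KH, PX, PY. auto_derive; auto. field. Qed.
Lemma dpx X Y Z A B C : Derive (fun u => KH X Y Z u B C) A = PX X Y A C.
Proof. apply is_derive_unique. unfold KH, PX, PY. auto_derive; auto. field. Qed.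
Lemma dpy X Y Z A B C : Derive (fun u => KH X Y Z A u C) B = PY X Y B C.
Proof. apply is_derive_unique. unfold KH, PX, PY. auto_derive; auto. field. Qed.

Lemma between a b t0 t s : in_open_interval a b t0 -> in_open_interval a b t ->
  Rmin t0 t <= s <= Rmax t0 t -> in_open_interval a b s.
Proof.
unfold in_open_interval, Rmin, Rmax; destruct (Rle_dec t0 t);
destruct a, b; simpl; intros; lra.
Qed.

Theorem mainTheorem4 (a b : Rbar) (x y z px py pz : R -> R) :
  KH_solution a b x y z px py pz ->
  (forall t, in_open_interval a b t -> z t = 0) ->
  exists alpha beta : R, ~ (alpha = 0 /\ beta = 0) /\
    forall t, in_open_interval a b t -> alpha * x t + beta * y t = 0.
Proof.
intros Hsol Hz.
destruct (Classical_Prop.classic (exists t0, in_open_interval a b t0)) as [[t0 Ht0]|Hn].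
2:{ exists 1, 0. split. lra. intros t Ht. exfalso. apply Hn. eauto. }
set (U := fun s => x s / sqrt (x s ^ 2 + y s ^ 2)).
set (V := fun s => y s / sqrt (x s ^ 2 + y s ^ 2)).
assert (Key : forall t, in_open_interval a b t ->
  0 < x t ^ 2 + y t ^ 2 /\ is_derive U t 0 /\ is_derive V t 0).
{ intros t Ht.
  destruct (Hsol t Ht) as (Hnz & Hx & Hy & Hzd & _).
  rewrite dpx in Hx. rewrite dpy in Hy. rewrite dpz in Hzd.
  assert (Hz0 : is_derive z t 0).
  { apply is_derive_ext_loc with (f := fun _ => 0).
    - destruct Ht as [H1 H2]. apply (locally_interval _ t a b H1 H2).
      intros s Hs1 Hs2. symmetry. apply Hz. split; auto.
    - auto_derive; auto. }
  assert (E := is_derive_unique _ _ _ Hzd). rewrite (is_derive_unique _ _ _ Hz0) in E.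
  assert (Hp : 0 < x t ^ 2 + y t ^ 2).
  { rewrite (Hz t Ht) in Hnz.
    destruct (Req_dec (x t) 0) as [Ex|Ex].
    - assert (y t <> 0) by tauto. assert (0 < y t ^ 2) by (apply pow2_gt_0; auto). nra.
    - assert (0 < x t ^ 2) by (apply pow2_gt_0; auto). nra. }
  destruct (qder x y t _ _ Hx Hy Hp) as [H1 H2].
  { lra. }
  split; [exact Hp | split; assumption]. }
assert (Const : forall W, (forall t, in_open_interval a b t -> is_derive W t 0) ->
  forall t, in_open_interval a b t -> W t = W t0).
{ intros W HW t Ht.
  destruct (MVT_gen W t0 t (fun _ => 0)) as (c & _ & Hc).
  - intros s Hs. apply HW. apply (between a b t0 t s Ht0 Ht). lra.
  - intros s Hs. apply continuity_pt_filterlim. apply (ex_derive_continuous (K:=R_AbsRing) (V:=R_NormedModule)).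
    eexists. apply HW. apply (between a b t0 t s Ht0 Ht). lra.
  - lra. }
assert (CU := Const U (fun t Ht => proj1 (proj2 (Key t Ht)))).
assert (CV := Const V (fun t Ht => proj2 (proj2 (Key t Ht)))).
destruct (Key t0 Ht0) as [Hp0 _].
assert (Hs0 : 0 < sqrt (x t0 ^ 2 + y t0 ^ 2)) by (apply sqrt_lt_R0; auto).
assert (HS0 : sqrt (x t0 ^ 2 + y t0 ^ 2) * sqrt (x t0 ^ 2 + y t0 ^ 2) = x t0 ^ 2 + y t0 ^ 2)
  by (apply sqrt_sqrt; lra).
exists (V t0), (- U t0). split.
- intros [E1 E2]. unfold U, V in *.
  assert (x t0 = 0).
  { apply Rmult_eq_reg_r with (/ sqrt (x t0 ^ 2 + y t0 ^ 2)).
    unfold Rdiv in E2. lra. apply Rinv_neq_0_compat; lra. }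
  assert (y t0 = 0).
  { apply Rmult_eq_reg_r with (/ sqrt (x t0 ^ 2 + y t0 ^ 2)).
    unfold Rdiv in E1. lra. apply Rinv_neq_0_compat; lra. }
  nra.
- intros t Ht. rewrite <- (CU t Ht), <- (CV t Ht).
  destruct (Key t Ht) as [Hp _].
  assert (Hs : 0 < sqrt (x t ^ 2 + y t ^ 2)) by (apply sqrt_lt_R0; auto).
  unfold U, V. field. lra.
Qed.
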